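(* Let $A=\mathrm{diag}(\lambda_1,\dots,\lambda_k)$ with distinct real $\lambda_j$, $|\lambda_j|>1$, let $h\ne0$, $p\ge0$, and let $\bar\Gamma\in\mathbb R^{1\times k}$ be a row vector with all entries nonzero. Let $\tilde J$ be the unique solution of $$\tilde J=A^{-1}\tilde JA^{-T}-\frac{\bar\Gamma^T\bar\Gamma}{1+h^2p}+A^{-1}\bar\Gamma^T\bar\Gamma A^{-T}.$$ Then, with $D_\Gamma=\mathrm{diag}(\bar\Gamma)$ (the diagonal matrix with the entries of $\bar\Gamma$ on its diagonal) and $M$ the solution of $M=A^{-1}MA^{-T}+\mathbf 1\mathbf 1^T$, $$\tilde J=D_\Gamma\Big(\frac{h^2p}{1+h^2p}M-\mathbf 1\mathbf 1^T\Big)D_\Gamma,$$ and $\tilde J\succ0$ if and only if $1+h^2p>|\det A|^2$, i.e. $\sum_{j=1}^k\log|\lambda_j|<\tfrac12\log(1+h^2p)$.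
   Context: $\mathbf 1\in\mathbb R^k$ denotes the all-ones vector. *)

(* Defs.v *)
From HB Require Import structures.
From mathcomp Require Import all_boot all_order all_algebra.
From mathcomp Require Import all_classical all_reals all_analysis.
Set Implicit Arguments. Unset Strict Implicit. Unset Printing Implicit Defensive.
Import Order.TTheory GRing.Theory Num.Theory.
Local Open Scope ring_scope.

Definition posdef (R : realType) (k : nat) (J : 'M[R]_k) : Prop :=
  J^T = J /\ forall x : 'cV[R]_k, x != 0 -> 0 < (x^T *m J *m x) 0 0.

(* Main.v *)
Require Import Defs.
From HB Require Import structures.
From mathcomp Require Import all_boot all_order all_algebra.
From mathcomp Require Import all_classical all_reals all_analysis.
From mathcomp Require Import ring lra.
Import Order.TTheory GRing.Theory Num.Theory.
Local Open Scope ring_scope.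

Module CoreM.
Set Implicit Arguments. Unset Strict Implicit. Unset Printing Implicit Defensive.

Section Core.
Variable R : realFieldType.
Variable b : nat -> R.

Definition Qf k (x : nat -> R) := \sum_(i < k) \sum_(j < k) x i * x j / (1 - b i * b j).
Definition Sf k (x : nat -> R) := \sum_(i < k) x i.
Definition betaf k := \prod_(i < k) (b i) ^+ 2.
Definition phi (c z : R) := (z - c) / (1 - c * z).
Definition Ff k (x : nat -> R) := \sum_(i < k.+1) x i / (1 - b i * b k).
Definition xpp k (x : nat -> R) := fun i => phi (b k) (b i) * x i.

Hypothesis Hb : forall i, `|b i| < 1.

Lemma den_ne0 i j : 1 - b i * b j != 0.
Proof.
have := Hb i; have := Hb j => hj hi.
apply/eqP => h.
have : `|b i * b j| < 1.
  rewrite normrM; have := normr_ge0 (b i); have := normr_ge0 (b j); nra.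
have -> : b i * b j = 1 by apply/eqP; rewrite -subr_eq0 -opprB oppr_eq0 h.
by rewrite normr1 ltxx.
Qed.

Lemma sq_lt1 i : (b i) ^+ 2 < 1.
Proof. have := Hb i; rewrite -real_normK ?num_real //; have := normr_ge0 (b i); nra. Qed.

Lemma xpp_k k x : xpp k x k = 0.
Proof. by rewrite /xpp /phi subrr mul0r mul0r. Qed.

Lemma Q_decomp k x :
  Qf k.+1 x = (1 - b k ^+ 2) * (Ff k x) ^+ 2 + Qf k (xpp k x).
Proof.
have -> : Qf k (xpp k x) = Qf k.+1 (xpp k x).
  rewrite /Qf big_ord_recr /= xpp_k.
  rewrite [X in _ + X]big1 ?addr0; last by move=> j _; rewrite !mul0r.
  apply: eq_bigr => i _; rewrite big_ord_recr /= xpp_k mulr0 mul0r addr0 //.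
rewrite [Ff _ _ ^+ 2]expr2 /Qf /Ff mulr_suml mulr_sumr -big_split /=; apply: eq_bigr => i _.
rewrite mulr_sumr mulr_sumr -big_split /=; apply: eq_bigr => j _.
rewrite /xpp /phi.
have h1 := den_ne0 i j; have h2 := den_ne0 i k; have h3 := den_ne0 j k.
have h4 := den_ne0 k i; have h5 := den_ne0 k j.
field; rewrite ?h1 ?h2 ?h3 ?h4 ?h5 //.
Qed.

Lemma S_decomp k x :
  Sf k.+1 x = (1 - b k ^+ 2) * Ff k x - b k * Sf k (xpp k x).
Proof.
have -> : Sf k (xpp k x) = Sf k.+1 (xpp k x).
  by rewrite /Sf big_ord_recr /= xpp_k addr0.
rewrite /Sf /Ff mulr_sumr mulr_sumr -sumrB; apply: eq_bigr => i _.
rewrite /xpp /phi.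
have h2 := den_ne0 i k; have h4 := den_ne0 k i.
field; rewrite ?h2 ?h4 //.
Qed.

Lemma w_gt0 k : 0 < 1 - b k ^+ 2.
Proof. by rewrite subr_gt0 sq_lt1. Qed.

Lemma beta_bounds k : 0 <= betaf k <= 1.
Proof.
elim: k => [|k IH]; first by rewrite /betaf big_ord0 ler01 lexx.
rewrite /betaf big_ord_recr /= -/(betaf k).
have := sq_lt1 k; have := sqr_ge0 (b k); move: IH => /andP[h1 h2]; move=> h3 h4.
apply/andP; split; nra.
Qed.

Lemma beta_lt1 k : (0 < k)%N -> betaf k < 1.
Proof.
case: k => // k _; rewrite /betaf big_ord_recr /= -/(betaf k).
have := sq_lt1 k; have := sqr_ge0 (b k); move: (beta_bounds k) => /andP[h1 h2] h3 h4.
nra.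
Qed.

Definition distinct k := forall i j, (i < k)%N -> (j < k)%N -> i != j -> b i != b j.

Lemma distinctS k : distinct k.+1 -> distinct k.
Proof. move=> H i j hi hj; apply: H; exact: ltnW. Qed.

Lemma phi_ne0 k i : (i < k)%N -> distinct k.+1 -> phi (b k) (b i) != 0.
Proof.
move=> hi H; rewrite /phi mulf_eq0 invr_eq0 negb_or den_ne0 andbT subr_eq0.
apply: H => //; [exact: ltnW | by rewrite neq_ltn hi].
Qed.

Lemma Q_pos k x : distinct k -> 0 <= Qf k x /\ (Qf k x = 0 -> forall i, (i < k)%N -> x i = 0).
Proof.
elim: k x => [|k IH] x Hd.
  by split=> //; rewrite /Qf big_ord0.
have [IH1 IH2] := IH (xpp k x) (distinctS Hd).
rewrite Q_decomp.
have hw := w_gt0 k; have hF := sqr_ge0 (Ff k x).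
split; first by apply: addr_ge0 => //; apply: mulr_ge0 => //; exact: ltW.
move=> h0.
have hQ : Qf k (xpp k x) = 0.
  apply/eqP; rewrite eq_le IH1 andbT; rewrite -h0 lerDr; apply: mulr_ge0=> //; exact: ltW.
have hF0 : Ff k x = 0.
  move: h0; rewrite hQ addr0 => /eqP; rewrite mulf_eq0 (negbTE (lt0r_neq0 hw)) /=.
  by rewrite expf_eq0 /= => /eqP.
have hlt : forall i, (i < k)%N -> x i = 0.
  move=> i hi; have := IH2 hQ i hi; rewrite /xpp => /eqP.
  by rewrite mulf_eq0 (negbTE (phi_ne0 hi Hd)) /= => /eqP.
move=> i; rewrite ltnS leq_eqVlt => /orP[/eqP ->|]; last exact: hlt.
move: hF0; rewrite /Ff big_ord_recr /= big1; last by move=> j _; rewrite hlt ?mul0r.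
rewrite add0r => /eqP; rewrite mulf_eq0 invr_eq0 (negbTE (den_ne0 k k)) orbF.
by move/eqP.
Qed.

Lemma S_ineq k x : distinct k -> Sf k x ^+ 2 <= (1 - betaf k) * Qf k x.
Proof.
elim: k x => [|k IH] x Hd.
  by rewrite /Sf /Qf !big_ord0 expr0n /= mulr0.
have IH1 := IH (xpp k x) (distinctS Hd).
have [hQ _] := Q_pos (xpp k x) (distinctS Hd).
rewrite Q_decomp S_decomp /betaf big_ord_recr /= -/(betaf k).
move: IH1 hQ (beta_bounds k) (sq_lt1 k) (sqr_ge0 (b k)).
set S' := Sf k _; set Q' := Qf k _; set be := betaf k; set F := Ff k x; set bk := b k.
move=> IH1 hQ /andP[hb1 hb2] hbk hbk0.
have [hbe|hne] := eqVneq be 1.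
  have hS : S' = 0.
    by apply/eqP; rewrite -sqrf_eq0 eq_le sqr_ge0 andbT; move: IH1; rewrite hbe subrr mul0r.
  rewrite hbe hS mul1r mulr0 subr0; nra.
have hlt : 0 < 1 - be by rewrite subr_gt0 lt_neqAle hne hb2.
rewrite -subr_ge0.
have -> : (1 - be * bk ^+ 2) * ((1 - bk ^+ 2) * F ^+ 2 + Q') - ((1 - bk ^+ 2) * F - bk * S') ^+ 2
  = ((1 - bk ^+ 2) * (bk * (1 - be) * F + S') ^+ 2 + (1 - be * bk ^+ 2) * ((1 - be) * Q' - S' ^+ 2)) / (1 - be).
  by field; rewrite lt0r_neq0.
apply: divr_ge0; last exact: ltW.
apply: addr_ge0; first by apply: mulr_ge0; [exact: ltW (w_gt0 k) | exact: sqr_ge0].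
apply: mulr_ge0; last by rewrite subr_ge0.
nra.
Qed.

Lemma witness k : distinct k -> (forall i, (i < k)%N -> b i != 0) -> (0 < k)%N ->
  exists x, (exists2 i, (i < k)%N & x i != 0) /\ Sf k x ^+ 2 = (1 - betaf k) * Qf k x.
Proof.
elim: k => [|k IH] Hd Hnz // _.
case: (posnP k) => [k0|kpos].
  subst k; exists (fun _ => 1); split; first by exists 0%N => //; exact: oner_neq0.
  rewrite /Sf /Qf /betaf !big_ord1 /=.
  have h := den_ne0 0 0; field; by rewrite h.
have [x' [[i0 hi0 hx0] Heq]] := IH (distinctS Hd) (fun i hi => Hnz i (ltnW hi)) kpos.
set S' := Sf k x' in Heq; set be := betaf k in Heq.
set F0 := - S' / (b k * (1 - be)).
pose x := fun i => if (i < k)%N then x' i / phi (b k) (b i) else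
   (1 - b k ^+ 2) * (F0 - \sum_(j < k) x' j / phi (b k) (b j) / (1 - b j * b k)).
have hxpp : forall i, (i < k)%N -> xpp k x i = x' i.
  move=> i hi; rewrite /xpp /x hi mulrC -mulrA mulVf ?mulr1 //; exact: phi_ne0.
have hS : Sf k (xpp k x) = S' by apply: eq_bigr => i _; rewrite hxpp.
have hQ : Qf k (xpp k x) = Qf k x' by apply: eq_bigr => i _; apply: eq_bigr => j _; rewrite !hxpp.
have hF : Ff k x = F0.
  rewrite /Ff big_ord_recr /= /x ltnn.
  rewrite (eq_bigr (fun j : 'I_k => x' j / phi (b k) (b j) / (1 - b j * b k))); last first.
    by move=> j _; rewrite ltn_ord.
  have h := den_ne0 k k; field; by rewrite h.
exists x; split.
  exists i0; first exact: ltnW.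
  by rewrite /x hi0 mulf_neq0 // invr_eq0 phi_ne0.
rewrite Q_decomp S_decomp hS hQ hF /betaf big_ord_recr /= -/(betaf k) -/be.
have hlt : 1 - be != 0 by rewrite subr_eq0 eq_sym lt_eqF // beta_lt1.
have -> : Qf k x' = S' ^+ 2 / (1 - be) by rewrite Heq mulrC mulKf.
have hbk : b k != 0 by apply: Hnz.
rewrite /F0; field; by rewrite hlt hbk.
Qed.

End Core.

Lemma inv_diag (R : fieldType) n (d : 'rV[R]_n) : (forall i, d 0 i != 0) ->
  invmx (diag_mx d) = diag_mx (\row_i (d 0 i)^-1).
Proof.
move=> hd.
have h1 : diag_mx d *m diag_mx (\row_i (d 0 i)^-1) = 1%:M.
  rewrite mulmx_diag -diag_const_mx; congr diag_mx; apply/rowP => j; rewrite !mxE divff //.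
have [hu _] := mulmx1_unit h1.
by rewrite -[RHS]mul1mx -(mulVmx hu) -mulmxA h1 mulmx1.
Qed.

Lemma entry_DAD (R : pzRingType) n (d e : 'rV[R]_n) (A : 'M[R]_n) :
  diag_mx d *m A *m diag_mx e = \matrix_(i, j) (d 0 i * A i j * e 0 j).
Proof. by apply/matrixP => i j; rewrite mul_diag_mx mul_mx_diag !mxE. Qed.

Lemma ln_prod (R : realType) n (f : 'I_n -> R) : (forall i, 0 < f i) ->
  \sum_i ln (f i) = ln (\prod_i f i).
Proof.
move=> hf.
suff [] : \sum_i ln (f i) = ln (\prod_i f i) /\ 0 < \prod_i f i by [].
elim/big_rec2: _ => [|i a c _ [IH hc]]; first by rewrite ln1.
split; last exact: mulr_gt0.
by rewrite IH lnM // posrE.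
Qed.

End CoreM.
Import CoreM.

Theorem mainTheorem6 (R : realType) (k : nat) (hk : (0 < k)%N)
  (lam : 'rV[R]_k) (h p : R) (Gam : 'rV[R]_k) (J M : 'M[R]_k) :
  (forall i j : 'I_k, i != j -> lam 0 i != lam 0 j) ->
  (forall j : 'I_k, 1 < `|lam 0 j|) ->
  h != 0 -> 0 <= p ->
  (forall j : 'I_k, Gam 0 j != 0) ->
  J = invmx (diag_mx lam) *m J *m (invmx (diag_mx lam))^T
      - (1 + h ^+ 2 * p)^-1 *: (Gam^T *m Gam)
      + invmx (diag_mx lam) *m Gam^T *m Gam *m (invmx (diag_mx lam))^T ->
  M = invmx (diag_mx lam) *m M *m (invmx (diag_mx lam))^T + const_mx 1 ->
  [/\ J = diag_mx Gam *m ((h ^+ 2 * p / (1 + h ^+ 2 * p)) *: M - const_mx 1)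
          *m diag_mx Gam,
      posdef J <-> `|\det (diag_mx lam)| ^+ 2 < 1 + h ^+ 2 * p
    & posdef J <-> \sum_(j < k) ln `|lam 0 j| < ln (1 + h ^+ 2 * p) / 2].
Proof.
case: k hk lam Gam J M => [//|n] _ lam Gam J M Hdist Hgt1 hh hp HG HJ HM.
have [c Hc] : exists c, c = 1 + h ^+ 2 * p by eexists.
rewrite -Hc in HJ *.
have hc1 : 1 <= c by rewrite Hc lerDl; apply: mulr_ge0 => //; exact: sqr_ge0.
have hc0 : 0 < c by apply: lt_le_trans hc1.
have hcn0 : c != 0 by rewrite gt_eqF.
have hl0 : forall i, lam 0 i != 0.
  move=> i; have := Hgt1 i; apply: contraTneq => ->; by rewrite normr0 ltr10.
have [be Hbe] : exists be : 'rV_n.+1, be = \row_i (lam 0 i)^-1 by eexists.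
have Hinv : invmx (diag_mx lam) = diag_mx be by rewrite Hbe; exact: inv_diag hl0.
pose bn (m : nat) := be 0 (inord m).
have Hbn : forall m, `|bn m| < 1.
  move=> m; rewrite /bn Hbe mxE normfV invf_lt1 //; last by rewrite normr_gt0.
have hden : forall i j : 'I_n.+1, 1 - be 0 i * be 0 j != 0.
  by move=> i j; have := den_ne0 Hbn i j; rewrite /bn !inord_val.
have hGG : Gam^T *m Gam = \matrix_(i, j) (Gam 0 i * Gam 0 j).
  by apply/matrixP => i j; rewrite !mxE big_ord1 !mxE.
rewrite Hinv tr_diag_mx -[diag_mx be *m Gam^T *m Gam]mulmxA hGG !entry_DAD in HJ.
rewrite Hinv tr_diag_mx !entry_DAD in HM.
have HJe : forall i j, J i j = Gam 0 i * Gam 0 j * ((be 0 i * be 0 j - c^-1) / (1 - be 0 i * be 0 j)).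
  move=> i j; move/matrixP: HJ => /(_ i j); rewrite !mxE => E.
  have E2 : J i j * (1 - be 0 i * be 0 j) = Gam 0 i * Gam 0 j * (be 0 i * be 0 j - c^-1).
    by rewrite mulrBr mulr1 {1}E; ring.
  apply: (mulIf (hden i j)); rewrite E2; field; by rewrite hden.
have HMe : forall i j, M i j = (1 - be 0 i * be 0 j)^-1.
  move=> i j; move/matrixP: HM => /(_ i j); rewrite !mxE => E.
  have E2 : M i j * (1 - be 0 i * be 0 j) = 1 by rewrite mulrBr mulr1 {1}E; ring.
  apply: (mulIf (hden i j)); rewrite E2 mulVf //.
have Part1 : J = diag_mx Gam *m ((h ^+ 2 * p / c) *: M - const_mx 1) *m diag_mx Gam.
  apply/matrixP => i j; rewrite entry_DAD !mxE HJe HMe.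
  have hh2 : h ^+ 2 * p = c - 1 by rewrite Hc; ring.
  rewrite hh2; field; rewrite ?hden ?hcn0 //.
have Hsym : J^T = J.
  by apply/matrixP => i j; rewrite mxE !HJe (mulrC (Gam 0 j)) (mulrC (be 0 j)).
pose yn (x : 'cV[R]_n.+1) (m : nat) := Gam 0 (inord m) * x (inord m) 0.
have Hquad : forall x : 'cV[R]_n.+1, (x^T *m J *m x) 0 0 =
    (1 - c^-1) * Qf bn n.+1 (yn x) - Sf n.+1 (yn x) ^+ 2.
  move=> x.
  have hS : Sf n.+1 (yn x) ^+ 2 = \sum_(i < n.+1) \sum_(j < n.+1) yn x i * yn x j.
    by rewrite expr2 mulr_suml; apply: eq_bigr => i _; rewrite mulr_sumr.
  rewrite hS /Qf mulr_sumr -sumrB mxE.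
  rewrite (eq_bigr (fun j : 'I_n.+1 => \sum_(i < n.+1) x i 0 * J i j * x j 0)); last first.
    by move=> j _; rewrite mxE mulr_suml; apply: eq_bigr => i _; rewrite mxE.
  rewrite exchange_big /=; apply: eq_bigr => i _.
  rewrite mulr_sumr -sumrB; apply: eq_bigr => j _.
  rewrite HJe /yn /bn !inord_val; field; rewrite ?hden ?hcn0 //.
have Hdistb : distinct bn n.+1.
  move=> i j hi hj hij; rewrite /bn Hbe !mxE (inj_eq invr_inj); apply: Hdist.
  by apply: contra hij => /eqP/(congr1 val) /=; rewrite !inordK // => ->.
have Hnzb : forall i, (i < n.+1)%N -> bn i != 0 by move=> i _; rewrite /bn Hbe mxE invr_neq0.
have Hbeta : betaf bn n.+1 = (\prod_i lam 0 i ^+ 2)^-1.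
  by rewrite /betaf -prodfV; apply: eq_bigr => i _; rewrite /bn inord_val Hbe mxE exprVn.
have Hdet : `|\det (diag_mx lam)| ^+ 2 = \prod_i lam 0 i ^+ 2.
  by rewrite det_diag real_normK ?num_real // prodrXl.
have hP : 0 < \prod_i lam 0 i ^+ 2.
  by apply: prodr_gt0 => q _; rewrite exprn_even_gt0 //= hl0 orbT.
have Hcond : (c^-1 < betaf bn n.+1) <-> (`|\det (diag_mx lam)| ^+ 2 < c).
  by rewrite Hbeta Hdet ltf_pV2 ?posrE.
have Hpd : posdef J <-> c^-1 < betaf bn n.+1.
  split.
  - case => _ Hpos; rewrite ltNge; apply/negP => Hle.
    have [yw [[i0 hi0 hy0] Heq]] := witness Hbn Hdistb Hnzb (ltn0Sn n).
    pose x : 'cV[R]_n.+1 := \col_i (yw i / Gam 0 i).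
    have hyx : forall m, (m < n.+1)%N -> yn x m = yw m.
      by move=> m hm; rewrite /yn /x mxE inordK // mulrCA mulfV ?mulr1.
    have hQx : Qf bn n.+1 (yn x) = Qf bn n.+1 yw.
      by apply: eq_bigr => i _; apply: eq_bigr => j _; rewrite !hyx.
    have hSx : Sf n.+1 (yn x) = Sf n.+1 yw by apply: eq_bigr => i _; rewrite hyx.
    have hx0 : x != 0.
      apply/negP => /eqP H; have := congr1 (fun A : 'cV[R]_n.+1 => A (inord i0) 0) H; rewrite !mxE inordK //.
      move/eqP; apply/negP; exact: mulf_neq0 hy0 (invr_neq0 (HG _)).
    have := Hpos x hx0; rewrite Hquad hQx hSx Heq.
    have [hQ0 _] := Q_pos Hbn yw Hdistb.
    move: hQ0 Hle; set Q := Qf bn n.+1 yw; set bb := betaf bn n.+1; set ci := c^-1.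
    move=> hQ0 Hle H; nra.
  - move=> Hlt; split => // x hx0; rewrite Hquad.
    have hS := S_ineq Hbn (yn x) Hdistb.
    have [hQ0 hQz] := Q_pos Hbn (yn x) Hdistb.
    have hQpos : 0 < Qf bn n.+1 (yn x).
      rewrite lt_neqAle hQ0 andbT eq_sym; apply/negP => /eqP hz.
      apply: (negP hx0); apply/eqP/matrixP => i j; rewrite (ord1 j) mxE.
      have := hQz hz i (ltn_ord i); rewrite /yn inord_val => /eqP.
      by rewrite mulf_eq0 (negbTE (HG i)) /= => /eqP.
    move: hS hQpos Hlt; set Q := Qf bn n.+1 (yn x); set S := Sf n.+1 (yn x).
    set bb := betaf bn n.+1; set ci := c^-1.
    move=> hS hQpos Hlt; nra.
have Hln : (`|\det (diag_mx lam)| ^+ 2 < c) <-> (\sum_j ln `|lam 0 j| < ln c / 2).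
  rewrite ln_prod; last by move=> j; rewrite normr_gt0.
  rewrite det_diag normr_prod.
  set P := \prod_j `|lam 0 j|.
  have hP0 : 0 < P by apply: prodr_gt0 => j _; rewrite normr_gt0.
  have -> : (P ^+ 2 < c) = (ln (P ^+ 2) < ln c) by rewrite ltr_ln // posrE ?exprn_gt0.
  rewrite lnXn // mulr2n; split => H; lra.
split => //.
- by apply: iff_trans Hpd Hcond.
- by apply: iff_trans (iff_trans Hpd Hcond) Hln.
Qed.
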